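(* Let $\alpha>-1$, $\beta>-1$, $c>0$, $\omega_{\alpha,\beta}(x)=(1-x)^{\alpha}(1+x)^{\beta}$, and $\mathcal{F}_c^{(\alpha,\beta)}[\phi](x)=\int_{-1}^{1}e^{c(xy-1)}\phi(y)\omega_{\alpha,\beta}(y)dy$ on $L^2((-1,1),\omega_{\alpha,\beta}(x)dx)$. Let $\psi_n^{(\alpha,\beta)}(\cdot;c)$ be an eigenfunction of $\mathcal{F}_c^{(\alpha,\beta)}$ with eigenvalue $\mu_n^{(\alpha,\beta)}(c)\ne0$, normalized so that $\int_{-1}^1(\psi_n^{(\alpha,\beta)}(x;c))^2\omega_{\alpha,\beta}(x)dx=(\mu_n^{(\alpha,\beta)}(c))^2$. Then for all $x\in(-1,1)$, $$|\psi_n^{(\alpha,\beta)}(x;c)|\le\frac{1}{\mathbf{P}_0^{(\alpha,\beta)}(x)}.$$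
   Context: $\mathbf{P}_0^{(\alpha,\beta)}$ is the normalized Jacobi polynomial of degree $0$, i.e. the constant $\mathbf{P}_0^{(\alpha,\beta)}=1/\sqrt{a_0^{\alpha,\beta}}$ with $a_0^{\alpha,\beta}=\int_{-1}^1\omega_{\alpha,\beta}(x)dx=\frac{2^{\alpha+\beta+1}\Gamma(\alpha+1)\Gamma(\beta+1)}{\Gamma(\alpha+\beta+2)}$, so that $\mathbf{P}_0^{(\alpha,\beta)}$ has unit norm in $L^2((-1,1),\omega_{\alpha,\beta}(x)dx)$. *)

(* Defs.v *)
From HB Require Import structures.
From mathcomp Require Import all_boot all_order all_algebra.
From mathcomp Require Import all_classical all_reals all_analysis.
Set Implicit Arguments. Unset Strict Implicit. Unset Printing Implicit Defensive.
Import Order.TTheory GRing.Theory Num.Theory.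
Local Open Scope ring_scope.
Local Open Scope classical_set_scope.

Definition jacobi_weight {R : realType} (a b : R) (x : R) : R :=
  ((1 - x) `^ a) * ((1 + x) `^ b).

Definition jacobi_a0 {R : realType} (a b : R) : R :=
  Rintegral lebesgue_measure `]-1, 1[ (jacobi_weight a b).

(* normalized Jacobi polynomial of degree 0: the constant 1/sqrt(a_0) *)
Definition jacobiP0 {R : realType} (a b : R) (x : R) : R :=
  (Num.sqrt (jacobi_a0 a b))^-1.

(* Main.v *)
Require Import Defs.
From HB Require Import structures.
From mathcomp Require Import all_boot all_order all_algebra.
From mathcomp Require Import all_classical all_reals all_analysis.
From mathcomp Require Import measurable_realfun.
From mathcomp Require Import ring lra.
Import Order.TTheory GRing.Theory Num.Theory.
Import numFieldNormedType.Exports.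
Local Open Scope ring_scope.
Local Open Scope classical_set_scope.
Lemma du_aff (R : realType) (s y : R) : is_derive y 1 (fun z : R => 1 + s * z) s.
Proof.
have -> : (fun z : R => 1 + s * z) = ((cst (1:R) : R -> R) + (s \*: (id : R -> R))).
  by apply/funext => z /=.
rewrite -[X in is_derive _ _ _ X]add0r.
apply: is_deriveD.
rewrite -[X in is_derive _ _ _ X]mulr1.
exact: is_deriveZ.
Qed.

Lemma derP (R : realType) (s q y : R) : 0 < 1 + s * y ->
  is_derive y 1 (fun z => (1 + s * z) `^ q) (q * (1 + s * y) `^ (q - 1) * s).
Proof.
move=> hy.
exact (@is_derive1_comp _ (fun x : R => x `^ q) (fun z => 1 + s * z) y _ _ (@is_derive1_powR _ q _ hy) (du_aff _ s y)).
Qed.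

Lemma contP (R : realType) (s q y : R) : 0 < 1 + s * y ->
  {for y, continuous (fun z : R => (1 + s * z) `^ q)}.
Proof.
move=> hy; case: (derP _ s q y hy) => d _.
by apply: differentiable_continuous; exact/derivable1_diffP.
Qed.

Lemma pos1 (R : realType) (s y : R) : s * s = 1 -> -1 < y -> y < 1 -> 0 < 1 + s * y.
Proof. move=> hs h1 h2; nra. Qed.
Lemma derH (R : realType) (s p y : R) : 0 < 1 + s * y -> p + 1 != 0 ->
  s * s = 1 ->
  is_derive y 1 (fun z => s / (p + 1) * (1 + s * z) `^ (p + 1)) ((1 + s * y) `^ p).
Proof.
move=> hy hp hs.
have du : is_derive y 1 (fun z : R => 1 + s * z) s.
  have -> : (fun z : R => 1 + s * z) = ((cst (1:R) : R -> R) + (s \*: (id : R -> R))).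
    by apply/funext => z /=.
  rewrite -[X in is_derive _ _ _ X]add0r.
  apply: is_deriveD.
  rewrite -[X in is_derive _ _ _ X]mulr1.
  exact: is_deriveZ.
have := @is_derive1_comp _ (fun x : R => x `^ (p + 1)) (fun z => 1 + s * z) y _ _ (@is_derive1_powR _ (p + 1) _ hy) du.
move=> /(is_deriveZ (s / (p + 1))).
have -> : (s / (p + 1)) \*: ((fun x : R => x `^ (p + 1)) \o (fun z => 1 + s * z)) = (fun z => s / (p + 1) * (1 + s * z) `^ (p + 1)).
  by apply/funext => z.
congr is_derive.
rewrite /GRing.scale /=.
rewrite addrK.
set X := _ `^ p.
have -> : s / (p+1) * ((p+1) * X * s) = (s*s) * ((p+1)/(p+1)) * X.
  by ring.
by rewrite hs divff // !mul1r.
Qed.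

Lemma contH (R : realType) (s p y : R) : 0 < 1 + s * y -> p + 1 != 0 -> s * s = 1 ->
  {for y, continuous (fun z : R => s / (p + 1) * (1 + s * z) `^ (p + 1))}.
Proof.
move=> hy hp hs; case: (derH _ _ _ _ hy hp hs) => d _.
by apply: differentiable_continuous; exact/derivable1_diffP.
Qed.

Lemma intF (R : realType) (s p lo hi : R) : s * s = 1 -> -1 < p -> -1 < lo -> lo < hi -> hi < 1 ->
  (\int[lebesgue_measure]_(y in `[lo, hi]) ((1 + s * y) `^ p)%:E =
   (s / (p+1) * (1 + s * hi) `^ (p + 1))%:E - (s / (p+1) * (1 + s * lo) `^ (p + 1))%:E)%E.
Proof.
move=> hs hp hlo hlohi hhi.
have hp1 : p + 1 != 0 by apply/eqP => h; lra.
have inI y : lo <= y -> y <= hi -> 0 < 1 + s*y by move=> *; apply: pos1 => //; lra.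
apply: (continuous_FTC2 (F := fun z => s / (p+1) * (1 + s * z) `^ (p + 1))) => //.
- apply: continuous_in_subspaceT => y; rewrite inE/= in_itv/= => /andP[h1 h2].
  exact: (contP _ s p y (inI y h1 h2)).
- split.
  + move=> y; rewrite in_itv /= => /andP[h1 h2].
    by case: (derH _ _ _ _ (inI y (ltW h1) (ltW h2)) hp1 hs).
  + apply: cvg_at_right_filter; exact: (contH _ _ _ _ (inI lo (lexx _) (ltW hlohi)) hp1 hs).
  + apply: cvg_at_left_filter; exact: (contH _ _ _ _ (inI hi (ltW hlohi) (lexx _)) hp1 hs).
- move=> y; rewrite in_itv /= => /andP[h1 h2].
  by case: (derH _ _ _ _ (inI y (ltW h1) (ltW h2)) hp1 hs) => _ <-; rewrite derive1E.
Qed.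

Lemma s_cases (R : realType) (s : R) : s * s = 1 -> s = 1 \/ s = -1.
Proof.
move=> hs.
have : (s - 1) * (s + 1) = 0 by rewrite mulrDr !mulrBl hs; ring.
move/eqP; rewrite mulf_eq0 => /orP[/eqP h|/eqP h]; [left|right]; lra.
Qed.

Lemma meas_aff (R : realType) (s p : R) (D : set R) : measurable D ->
  measurable_fun D (fun y : R => ((1 + s * y) `^ p)%:E).
Proof.
move=> mD; apply/measurable_EFinP.
apply: (measurableT_comp (measurable_powR p)).
apply: measurable_funD; [exact: measurable_cst | exact: mulrl_measurable].
Qed.

Lemma fin_pow (R : realType) (s p : R) : s * s = 1 -> -1 < p ->
  (\int[lebesgue_measure]_(y in `](-1)%R : R, 1%R[) ((1 + s * y) `^ p)%:E < +oo)%E.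
Proof.
move=> hs hp.
pose e := fun n : nat => (n.+2%:R : R)^-1.
pose F := fun n => `[-1 + e n, 1 - e n]%classic.
have eM n : e n * n.+2%:R = 1 by rewrite /e mulVf // pnatr_eq0.
have e_gt0 n : 0 < e n by rewrite /e invr_gt0 ltr0n.
have e_le n : e n <= 2^-1.
  have h2 : (2:R) <= n.+2%:R by rewrite ler_nat.
  have := eM n; have := e_gt0 n; move=> *; nra.
have ndF : {homo F : n m / (n <= m)%N >-> (n <= m)%O}.
  move=> n m nm; rewrite /F subsetEset => y /=; apply: subset_itv; rewrite bnd_simp.
    have : e m <= e n by rewrite /e lef_pV2 ?ler_nat ?posrE ?ltr0n.
    lra.
  have : e m <= e n by rewrite /e lef_pV2 ?ler_nat ?posrE ?ltr0n.
  lra.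
have UF : \bigcup_n F n = `](-1)%R : R, 1%R[%classic.
  apply/seteqP; split => y /=.
    move=> [n _]; rewrite /F /= !in_itv /= => /andP[h1 h2].
    have := e_gt0 n; move=> ?; apply/andP; split; lra.
  rewrite in_itv /= => /andP[h1 h2].
  pose d := Num.min (1 + y) (1 - y).
  have d_gt0 : 0 < d by rewrite /d lt_min; apply/andP; split; lra.
  have dle1 : d <= 1 + y by rewrite /d ge_min lexx.
  have dle2 : d <= 1 - y by rewrite /d ge_min lexx orbT.
  have dVpos : 0 <= d^-1 by rewrite invr_ge0 ltW.
  have := archi_boundP dVpos.
  set N := Num.Def.archi_bound _ => hN.
  exists N => //.
  rewrite /F /= in_itv /=.
  have hNN : (N%:R : R) <= N.+2%:R by rewrite ler_nat -addn2 leq_addr.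
  have dV : d * d^-1 = 1 by rewrite mulfV // gt_eqF.
  have := eM N; have := e_gt0 N; move=> *.
  have : e N < d by nra.
  move=> ?; apply/andP; split; lra.
have mF n : measurable (F n) by exact: measurable_itv.
have mf n : measurable_fun (F n) (fun y : R => ((1 + s * y) `^ p)%:E).
  exact: meas_aff.
have f0 n y : F n y -> (0%R <= ((1 + s * y) `^ p)%:E)%E.
  by move=> _; rewrite lee_fin powR_ge0.
have := ge0_nondecreasing_set_cvg_integral (mu := lebesgue_measure) ndF mF mf f0.
rewrite UF => hcvg.
rewrite -(cvg_lim _ hcvg) //.
apply: (@le_lt_trans _ _ (2 * ((p + 1)^-1 * 2 `^ (p + 1)))%:E); last by rewrite ltry.
apply: lime_le; first by apply/cvg_ex; eexists; exact: hcvg.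
apply: nearW => n.
have hlo : -1 < -1 + e n by have := e_gt0 n; lra.
have hhi : 1 - e n < 1 by have := e_gt0 n; lra.
have hlh : -1 + e n < 1 - e n by have := e_le n; have := e_gt0 n; lra.
rewrite /F (intF _ s p _ _ hs hp hlo hlh hhi).
rewrite -EFinB lee_fin.
have hp1 : 0 < p + 1 by lra.
have bnd z : -1 < z -> z < 1 ->
   `|s / (p + 1) * (1 + s * z) `^ (p + 1)| <= (p + 1)^-1 * 2 `^ (p + 1).
  move=> z1 z2.
  have hz := pos1 _ _ _ hs z1 z2.
  have hX : (1 + s * z) `^ (p + 1) <= 2 `^ (p + 1).
    apply: ge0_ler_powR; rewrite ?nnegrE; try lra.
    by case: (s_cases _ _ hs) => ->; lra.
  rewrite -mulrA normrM normrM.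
  have -> : `|s| = 1 by case: (s_cases _ _ hs) => ->; rewrite ?normrN normr1.
  rewrite mul1r (ger0_norm (powR_ge0 _ _)) ger0_norm; last by rewrite invr_ge0 ltW.
  by apply: ler_wpM2l => //; rewrite invr_ge0 ltW.
have b1 := bnd _ (lt_trans hlo hlh) hhi.
have b2 := bnd _ hlo (lt_trans hlh hhi).
move: b1 b2; set A := s / (p + 1) * _; set B := s / (p + 1) * _.
move=> b1 b2.
have hA : A <= (p + 1)^-1 * 2 `^ (p + 1) := ler_normlW b1.
have hB : - B <= (p + 1)^-1 * 2 `^ (p + 1) by apply: ler_normlW; rewrite normrN.
lra.
Qed.

Lemma pow_bnd (R : realType) (q t : R) : 0 <= t -> t < 1 -> (1 + t) `^ q <= expR `|q|.
Proof.
move=> t0 t1.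
rewrite /powR gt_eqF; last lra.
rewrite ler_expR.
have L0 : 0 <= ln (1 + t) by apply: ln_ge0; lra.
have L1 : ln (1 + t) <= t by apply: le_ln1Dx; lra.
have := ler_norm q; have := normr_ge0 q; have := ler_normlW (lexx `|q|).
rewrite -normrN; move=> *.
have : - q <= `|q| by rewrite -normrN; exact: ler_norm.
move=> *; nra.
Qed.

Lemma w_bnd (R : realType) (a b y : R) : -1 < y -> y < 1 ->
  jacobi_weight a b y <= expR `|b| * (1 + (-1) * y) `^ a + expR `|a| * (1 + 1 * y) `^ b.
Proof.
move=> y1 y2; rewrite /jacobi_weight mulN1r mul1r.
have X0 := powR_ge0 (1 - y) a; have Y0 := powR_ge0 (1 + y) b.
have Ea := expR_gt0 `|a|; have Eb := expR_gt0 `|b|.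
case: (leP 0 y) => hy.
- have := pow_bnd _ b _ hy y2; move=> *; nra.
- have h1 : 0 <= - y by lra.
  have h2 : - y < 1 by lra.
  have := pow_bnd _ a _ h1 h2; move=> *; nra.
Qed.

Lemma meas_w (R : realType) (a b : R) (D : set R) : measurable D ->
  measurable_fun D (fun y : R => (jacobi_weight a b y)%:E).
Proof.
move=> mD; apply/measurable_EFinP; rewrite /jacobi_weight.
apply: measurable_funM.
  apply: (measurableT_comp (measurable_powR a)).
  by apply: measurable_funB; [exact: measurable_cst | exact: measurable_id].
apply: (measurableT_comp (measurable_powR b)).
by apply: measurable_funD; [exact: measurable_cst | exact: measurable_id].
Qed.

Lemma w_ge0 (R : realType) (a b y : R) : 0 <= jacobi_weight a b y.
Proof. by rewrite /jacobi_weight mulr_ge0 // powR_ge0. Qed.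

Lemma w_fin (R : realType) (a b : R) : -1 < a -> -1 < b ->
  (\int[lebesgue_measure]_(y in `](-1)%R : R, 1%R[) (jacobi_weight a b y)%:E < +oo)%E.
Proof.
move=> ha hb.
have mI : measurable (`](-1)%R : R, 1%R[ : set R) by exact: measurable_itv.
have hs1 : (-1 : R) * -1 = 1 by rewrite mulN1r opprK.
have hs2 : (1 : R) * 1 = 1 by rewrite mulr1.
have F1 := fin_pow _ _ _ hs1 ha.
have F2 := fin_pow _ _ _ hs2 hb.
apply: (@le_lt_trans _ _ (\int[lebesgue_measure]_(y in `](-1)%R : R, 1%R[)
   ((expR `|b|)%:E * ((1 + (-1) * y) `^ a)%:E + (expR `|a|)%:E * ((1 + 1 * y) `^ b)%:E))%E).
  apply: ge0_le_integral => //.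
  - by move=> y _; rewrite lee_fin w_ge0.
  - exact: meas_w.
  - apply: emeasurable_funD; apply: emeasurable_funM => //; exact: meas_aff.
  - move=> y; rewrite /= in_itv /= => /andP[y1 y2].
    by rewrite -!EFinM -EFinD lee_fin w_bnd.
rewrite ge0_integralD //; first last.
- apply: emeasurable_funM => //; exact: meas_aff.
- by move=> y _; rewrite -EFinM lee_fin mulr_ge0 ?expR_ge0 ?powR_ge0.
- apply: emeasurable_funM => //; exact: meas_aff.
- by move=> y _; rewrite -EFinM lee_fin mulr_ge0 ?expR_ge0 ?powR_ge0.
rewrite !ge0_integralZl_EFin //.
all: try exact: meas_aff.
all: try exact: expR_ge0.
all: try (by move=> y _; rewrite lee_fin powR_ge0).
by apply: lte_add_pinfty; apply: lte_mul_pinfty => //; rewrite lee_fin expR_ge0.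
Qed.

Lemma amgm (R : realType) (k P w l : R) : 0 < k -> k <= 1 -> 0 <= w -> 0 < l ->
  `|k * P * w| <= l / 2 * w + (2 * l)^-1 * (P ^+ 2 * w).
Proof.
move=> k0 k1 w0 l0.
rewrite !normrM (ger0_norm (ltW k0)) (ger0_norm w0) -(real_normK (num_real P)).
set Q := `|P|.
rewrite -subr_ge0.
have -> : l / 2 * w + (2 * l)^-1 * (Q ^+ 2 * w) - k * Q * w =
   (2 * l)^-1 * w * ((l * k - Q) ^+ 2 + l ^+ 2 * (1 - k ^+ 2)).
  by field; apply/eqP => h; lra.
apply: mulr_ge0; first by apply: mulr_ge0 => //; rewrite invr_ge0; lra.
apply: addr_ge0; first exact: sqr_ge0.
apply: mulr_ge0; first exact: sqr_ge0.
nra.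
Qed.

Theorem proposition1 (R : realType) (a b c : R) (psi : R -> R) (mu : R)
  (ha : -1 < a) (hb : -1 < b) (hc : 0 < c) (hmu : mu != 0)
  (hpsi_meas : measurable_fun `](-1)%R : R, 1%R[ psi)
  (heig : forall x : R, x \in `](-1)%R : R, 1%R[ ->
     (\int[lebesgue_measure]_(y in `](-1)%R : R, 1%R[)
        (expR (c * (x * y - 1)) * psi y * jacobi_weight a b y)%:E
      = (mu * psi x)%:E)%E)
  (hnorm : (\int[lebesgue_measure]_(y in `](-1)%R : R, 1%R[)
        ((psi y) ^+ 2 * jacobi_weight a b y)%:E = (mu ^+ 2)%:E)%E) :
  forall x : R, x \in `](-1)%R : R, 1%R[ -> `|psi x| <= 1 / jacobiP0 a b x.
Proof.
move=> x xI.
have mI : measurable (`](-1)%R : R, 1%R[ : set R) by exact: measurable_itv.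
have hw := w_fin _ a b ha hb.
have hw0 : (0 <= \int[lebesgue_measure]_(y in `](-1)%R : R, 1%R[) (jacobi_weight a b y)%:E)%E.
  by apply: integral_ge0 => y _; rewrite lee_fin w_ge0.
set A := jacobi_a0 a b.
have hA : (\int[lebesgue_measure]_(y in `](-1)%R : R, 1%R[) (jacobi_weight a b y)%:E)%E = A%:E.
  by rewrite /A /jacobi_a0 /Rintegral fineK // ge0_fin_numE.
have A0 : 0 <= A by rewrite -lee_fin -hA.
have := xI; rewrite inE /= in_itv /= => /andP[x1 x2].
pose k := fun y : R => expR (c * (x * y - 1)).
have k0 y : 0 < k y := expR_gt0 _.
have k1 y : -1 < y -> y < 1 -> k y <= 1.
  move=> y1 y2; rewrite /k expR_le1.
  have : x * y < 1 by nra.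
  nra.
have mk : measurable_fun `](-1)%R : R, 1%R[ k.
  apply: measurableT_comp; first exact: measurable_expR.
  apply: measurable_funM; first exact: measurable_cst.
  by apply: measurable_funB; [exact: mulrl_measurable | exact: measurable_cst].
have mwr : measurable_fun `](-1)%R : R, 1%R[ (jacobi_weight a b).
  by apply/measurable_EFinP; exact: (meas_w _ a b _ mI).
have mpw : measurable_fun `](-1)%R : R, 1%R[ (fun y => (psi y ^+ 2 * jacobi_weight a b y)%:E).
  apply/measurable_EFinP; apply: measurable_funM => //.
  exact: measurable_funX.
have mf : measurable_fun `](-1)%R : R, 1%R[ (fun y => (k y * psi y * jacobi_weight a b y)%:E).
  by apply/measurable_EFinP; apply: measurable_funM => //; apply: measurable_funM.
have key lam : 0 < lam -> `|mu * psi x| <= lam / 2 * A + (2 * lam)^-1 * mu ^+ 2.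
  move=> l0.
  rewrite -lee_fin -abse_EFin -(heig x xI).
  have := le_abse_integral lebesgue_measure mI mf.
  move=> /le_trans; apply.
  have H2 : (\int[lebesgue_measure]_(y in `](-1)%R : R, 1%R[) `|(k y * psi y * jacobi_weight a b y)%:E| <=
    \int[lebesgue_measure]_(y in `](-1)%R : R, 1%R[)
     ((lam / 2)%:E * (jacobi_weight a b y)%:E + ((2 * lam)^-1)%:E * (psi y ^+ 2 * jacobi_weight a b y)%:E))%E.
    apply: ge0_le_integral => //.
    + by apply: measurableT_comp => //; exact: abse_measurable.
    + apply: emeasurable_funD; apply: emeasurable_funM => //; exact: meas_w.
    + move=> y; rewrite /= in_itv /= => /andP[y1 y2].
      rewrite ?abse_EFin -!EFinM -EFinD lee_fin.
      exact: amgm (k0 y) (k1 y y1 y2) (w_ge0 _ a b y) l0.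
  apply: (le_trans H2).
  have l20 : 0 <= lam / 2 by rewrite divr_ge0 // ltW.
  have l30 : 0 <= (2 * lam)^-1 by rewrite invr_ge0 mulr_ge0 // ltW.
  rewrite ge0_integralD //; last 4 first.
  - by move=> y _; rewrite -EFinM lee_fin; apply: mulr_ge0 => //; exact: w_ge0.
  - apply: emeasurable_funM => //; exact: meas_w.
  - move=> y _; rewrite -EFinM lee_fin; apply: mulr_ge0 => //.
    by apply: mulr_ge0; [exact: sqr_ge0 | exact: w_ge0].
  - exact: emeasurable_funM.
  rewrite !ge0_integralZl_EFin //; try (by move=> y _; rewrite lee_fin ?w_ge0 //; apply: mulr_ge0; [exact: sqr_ge0 | exact: w_ge0]); try exact: meas_w.
  - by rewrite hA hnorm -!EFinM -EFinD.
  - by move=> y _; rewrite lee_fin; exact: w_ge0.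
rewrite /jacobiP0.
rewrite div1r invrK -/A.
set S := Num.sqrt A.
have S0 : 0 <= S by exact: sqrtr_ge0.
have SS : S ^+ 2 = A by exact: sqr_sqrtr.
have m0 : 0 < `|mu| by rewrite normr_gt0.
have P0 : 0 <= `|psi x| by exact: normr_ge0.
have mu2 : mu ^+ 2 = `|mu| ^+ 2 by rewrite real_normK // num_real.
have [Spos|Sle] := ltP 0 S.
- have := key (`|mu| / S) (divr_gt0 m0 Spos).
  have -> : `|mu| / S / 2 * A + (2 * (`|mu| / S))^-1 * mu ^+ 2 = `|mu| * S.
    rewrite -SS mu2; field; apply/andP; split; apply/eqP => h; lra.
  by rewrite normrM ler_pM2l.
- rewrite leNgt; apply/negP => hP.
  have Sz : S = 0 by apply/eqP; rewrite eq_le Sle S0.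
  have Az : A = 0 by rewrite -SS Sz expr0n.
  have Ppos : 0 < `|psi x| by rewrite (lt_le_trans _ (lexx _)) // -Sz.
  have := key (`|mu| / `|psi x|) (divr_gt0 m0 Ppos).
  rewrite Az mulr0 add0r mu2 normrM.
  have -> : (2 * (`|mu| / `|psi x|))^-1 * `|mu| ^+ 2 = `|mu| * `|psi x| / 2.
    field; apply/andP; split; apply/eqP => h; lra.
  have : 0 < `|mu| * `|psi x| by rewrite mulr_gt0.
  lra.
Qed.
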